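(* For any sum-indecomposable permutation $\sigma$, the class $\mathrm{St}(\mathrm{Inc},\mathrm{Av}(\sigma))$ is a subclass of $\mathrm{Av}(1\ominus\sigma)$.
   Context: $\mathrm{Av}(\sigma)$ is the class of permutations not containing $\sigma$; $\mathrm{Inc}=\mathrm{Av}(21)$ is the class of increasing permutations. $\pi\oplus\sigma$ is the permutation whose diagram is a copy of $\pi$ with a copy of $\sigma$ placed above and to the right; $\pi\ominus\sigma$ has a copy of $\sigma$ placed below and to the right of a copy of $\pi$. $\sigma$ is sum-indecomposable if it is not a direct sum of two shorter permutations. Grid classes: for a $k\times\ell$ matrix $\mathcal{M}$ of permutation classes ($k$ columns, $\ell$ rows, $\mathcal{M}_{i,j}$ in column $i$, row $j$, rows numbered bottom to top), a permutation $\pi$ of length $n$ is in $\mathrm{Grid}(\mathcal{M})$ if there are $1=c_1\le\dots\le c_{k+1}=n+1$, $1=r_1\le\dots\le r_{\ell+1}=n+1$ such that for each $i,j$ the points $(x,\pi_x)$ with $c_i\le x<c_{i+1}$, $r_j\le\pi_x<r_{j+1}$ form a pattern in $\mathcal{M}_{i,j}$. For classes $\mathcal{C},\mathcal{D}$, $\mathrm{St}_k(\mathcal{C},\mathcal{D})=\mathrm{Grid}(\mathcal{M})$ where $\mathcal{M}$ is the matrix with $k$ columns and $k+1$ rows whose only nonempty entries are $\mathcal{M}_{i,i+1}=\mathcal{C}$ and $\mathcal{M}_{i,i}=\mathcal{D}$ for $i\in[k]$ (so in each column the $\mathcal{C}$-cell lies directly above the $\mathcal{D}$-cell), and $\mathrm{St}(\mathcal{C},\mathcal{D})=\bigcup_{k\ge1}\mathrm{St}_k(\mathcal{C},\mathcal{D})$.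 *)

(* Defs.v *)
From mathcomp Require Import all_boot.
Set Implicit Arguments. Unset Strict Implicit. Unset Printing Implicit Defensive.

(* Permutations of length n are sequences that are rearrangements of
   0, 1, ..., n-1 (0-based values; the diagram point of position x is
   (x, nth 0 p x)). *)
Definition is_perm (p : seq nat) : Prop := perm_eq p (iota 0 (size p)).

Definition std (s : seq nat) : seq nat :=
  [seq count (fun y => y < x) s | x <- s].

Definition order_iso (s t : seq nat) : Prop :=
  size s = size t /\
  forall i j, i < size s -> j < size s ->
    (nth 0 s i < nth 0 s j) = (nth 0 t i < nth 0 t j).

Definition contains (pi sigma : seq nat) : Prop :=
  exists m : bitseq, size m = size pi /\ order_iso (mask m pi) sigma.

Definition perm_class := seq nat -> Prop.

Definition Av (sigma : seq nat) : perm_class := fun pi => ~ contains pi sigma.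

Definition Inc : perm_class := Av [:: 1; 0].

Definition dsum (a b : seq nat) : seq nat := a ++ [seq size a + x | x <- b].
Definition skew_sum (a b : seq nat) : seq nat := [seq size b + x | x <- a] ++ b.

Definition sum_indecomposable (sigma : seq nat) : Prop :=
  forall a b, is_perm a -> is_perm b -> sigma = dsum a b -> a = [::] \/ b = [::].

Definition cell (pi : seq nat) (c0 c1 r0 r1 : nat) : seq nat :=
  [seq nth 0 pi x | x <- iota 0 (size pi) &
     (c0 <= x < c1) && (r0 <= nth 0 pi x < r1)].

(* Grid class of a k-column, l-row matrix M of classes (M i j : column i,
   row j, 0-based, rows numbered bottom to top). Dividers c_0..c_k and
   r_0..r_l (0-based version of 1 = c_1 <= ... <= c_{k+1} = n+1). *)
Definition Grid (k l : nat) (M : nat -> nat -> perm_class) : perm_class :=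
  fun pi =>
    exists (c r : nat -> nat),
      [/\ c 0 = 0, c k = size pi & (forall i, i < k -> c i <= c i.+1)] /\
      [/\ r 0 = 0, r l = size pi & (forall j, j < l -> r j <= r j.+1)] /\
      (forall i j, i < k -> j < l ->
            M i j (std (cell pi (c i) (c i.+1) (r j) (r j.+1)))).

Definition Empty_cell : perm_class := fun p => p = [::].

Definition St_k (k : nat) (C D : perm_class) : perm_class :=
  Grid k k.+1 (fun i j => if j == i then D else if j == i.+1 then C
                          else Empty_cell).

Definition St (C D : perm_class) : perm_class :=
  fun pi => exists k, 1 <= k /\ St_k k C D pi.

(* Main.v *)
Require Import Defs.
From mathcomp Require Import all_boot.
From mathcomp Require Import zify.
Set Implicit Arguments. Unset Strict Implicit. Unset Printing Implicit Defensive.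

Lemma order_iso_sym s t : order_iso s t -> order_iso t s.
Proof. by case=> hs h; split=> // i j hi hj; rewrite h // hs. Qed.

Lemma order_iso_trans s t u : order_iso s t -> order_iso t u -> order_iso s u.
Proof.
case=> h1 h2 [h3 h4]; split; first by rewrite h1.
by move=> i j hi hj; rewrite h2 // h4 // -h1.
Qed.

Lemma order_iso_cons a b s t : order_iso (a :: s) (b :: t) -> order_iso s t.
Proof.
case=> /= [[hs] h]; split=> // i j hi hj.
by have := h i.+1 j.+1 hi hj.
Qed.

Lemma mask_nth_iota (m : bitseq) (s : seq nat) :
  mask m s = map (nth 0 s) (mask m (iota 0 (size s))).
Proof. by rewrite map_mask -/(mkseq _ _) mkseq_nth. Qed.

Lemma order_iso_map s t K : order_iso s t -> all (fun k => k < size s) K ->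
  order_iso (map (nth 0 s) K) (map (nth 0 t) K).
Proof.
case=> hs h /allP hK; split; first by rewrite !size_map.
move=> i j; rewrite size_map => hi hj.
by rewrite !(nth_map 0) //; apply: h; apply: hK; exact: mem_nth.
Qed.

Lemma order_iso_mask s t m : order_iso s t -> order_iso (mask m s) (mask m t).
Proof.
move=> h; have hs := proj1 h.
rewrite (mask_nth_iota m s) (mask_nth_iota m t) -hs; apply: order_iso_map => //.
by apply/allP => x /mem_mask; rewrite mem_iota.
Qed.

Lemma count_lt_mono (s : seq nat) x y : x \in s -> x < y ->
  count (fun z => z < x) s < count (fun z => z < y) s.
Proof.
elim: s => //= z s IH; rewrite in_cons => /orP [/eqP -> | hx] hxy.
  rewrite ltnn hxy add0n add1n ltnS; apply: sub_count => w /= hw.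
  exact: ltn_trans hw hxy.
rewrite -addnS; apply: leq_add; last exact: IH.
case: (ltnP z x) => hzx; first by rewrite (ltn_trans hzx hxy).
by case: (z < y).
Qed.

Lemma std_iso s : order_iso s (std s).
Proof.
split; first by rewrite size_map.
move=> i j hi hj; rewrite /std !(nth_map 0) //.
case: (ltnP (nth 0 s i) (nth 0 s j)) => h.
  by rewrite count_lt_mono // mem_nth.
apply/esym/negbTE; rewrite -leqNgt; apply: sub_count => z /= hz.
exact: leq_trans hz h.
Qed.

Lemma contains_cell pi tau c0 c1 r0 r1 J :
  subseq J (iota 0 (size pi)) ->
  all (fun j => (c0 <= j < c1) && (r0 <= nth 0 pi j < r1)) J ->
  order_iso (map (nth 0 pi) J) tau ->
  contains (std (cell pi c0 c1 r0 r1)) tau.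
Proof.
move=> hsub hall hiso.
have: subseq J [seq x <- iota 0 (size pi) | (c0 <= x < c1) && (r0 <= nth 0 pi x < r1)].
  by rewrite subseq_filter hall hsub.
case/subseqP => m hm hJ.
exists m; split; first by rewrite /std /cell !size_map.
apply: order_iso_trans (order_iso_sym (order_iso_mask m (std_iso _))) _.
by rewrite /cell -map_mask -hJ.
Qed.

Lemma split_perm (s : seq nat) k :
  is_perm s -> k <= size s ->
  (forall l l', l < k -> k <= l' < size s -> nth 0 s l < nth 0 s l') ->
  [/\ is_perm (take k s), is_perm (map (subn^~ k) (drop k s))
    & s = dsum (take k s) (map (subn^~ k) (drop k s))].
Proof.
rewrite /is_perm => hp hk hlt.
have hu : uniq s by rewrite (perm_uniq hp) iota_uniq.
have hmem x : (x \in s) = (x < size s) by rewrite (perm_mem hp) mem_iota.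
have hxy x y : x \in take k s -> y \in drop k s -> x < y.
  move=> /(nthP 0) [l hl <-] /(nthP 0) [l' hl' <-].
  rewrite size_takel // in hl; rewrite size_drop in hl'.
  rewrite nth_take // nth_drop; apply: hlt => //; have hl2 : l' < size s - k := hl'; lia.
have hsub x : x \in take k s -> x \in s by move=> h; rewrite -(cat_take_drop k s) mem_cat h.
have hsubd x : x \in drop k s -> x \in s by move=> h; rewrite -(cat_take_drop k s) mem_cat h orbT.
have htk x : x \in take k s -> x < k.
  move=> hx; have hxn : x < size s by rewrite -hmem hsub.
  have := @uniq_leq_size _ (drop k s) (iota x.+1 (size s - x.+1)) (drop_uniq k hu).
  rewrite size_iota size_drop => H.
  have : size s - k <= size s - x.+1.
    apply: H => y hy; rewrite mem_iota; have := hxy _ _ hx hy.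
    have : y < size s by rewrite -hmem hsubd.
    lia.
  lia.
have hdk y : y \in drop k s -> k <= y.
  move=> hy.
  have := @uniq_leq_size _ (take k s) (iota 0 y) (take_uniq k hu).
  rewrite size_iota size_takel // => H; apply: H => x hx; rewrite mem_iota.
  by have := hxy _ _ hx hy; lia.
split.
- rewrite size_takel //; apply: uniq_perm; rewrite ?iota_uniq ?take_uniq //.
  have [] := @uniq_min_size _ (take k s) (iota 0 k) (take_uniq k hu).
  + by move=> x hx; rewrite mem_iota add0n htk.
  + by rewrite size_iota size_takel.
  by [].
- rewrite size_map size_drop; apply: uniq_perm; rewrite ?iota_uniq //.
    rewrite map_inj_in_uniq ?drop_uniq // => x y hx hy /=.
    by have := hdk _ hx; have := hdk _ hy; lia.
  have hU : uniq (map (subn^~ k) (drop k s)).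
    rewrite map_inj_in_uniq ?drop_uniq // => x y hx hy /=.
    by have := hdk _ hx; have := hdk _ hy; lia.
  have [] := @uniq_min_size _ _ (iota 0 (size s - k)) hU.
  + move=> z /mapP [y hy ->]; rewrite mem_iota add0n.
    have := hdk _ hy; have : y < size s by rewrite -hmem hsubd.
    lia.
  + by rewrite size_iota size_map size_drop.
  by [].
- rewrite /dsum size_takel // -map_comp.
  rewrite -[LHS](cat_take_drop k s); congr (_ ++ _).
  rewrite -[LHS]map_id; apply/eq_in_map => y hy /=.
  by have := hdk _ hy; lia.
Qed.

Lemma mono_div (c : nat -> nat) k : (forall i, i < k -> c i <= c i.+1) ->
  forall a b, a <= b -> b <= k -> c a <= c b.
Proof.
move=> h a b; elim: b => [|b IH]; first by rewrite leqn0 => /eqP->.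
rewrite leq_eqVlt => /orP[/eqP-> //| hab] hb.
rewrite ltnS in hab.
exact: leq_trans (IH hab (ltnW hb)) (h _ hb).
Qed.

Lemma div_mono (c : nat -> nat) k i i' x y :
  (forall i, i < k -> c i <= c i.+1) -> i < k -> i' < k ->
  c i <= x -> y < c i'.+1 -> x <= y -> i <= i'.
Proof.
move=> h hi hi' h1 h2 hxy; rewrite leqNgt; apply/negP => hlt.
have := mono_div h hlt (ltnW hi); lia.
Qed.

Lemma locate (c : nat -> nat) k x : c 0 = 0 -> x < c k ->
  exists i, i < k /\ c i <= x < c i.+1.
Proof.
move=> c0; elim: k => [|k IH]; first by rewrite c0.
move=> hx; case: (leqP (c k) x) => h.
  by exists k; rewrite h hx.
by have [i [hi hi2]] := IH h; exists i; split => //; apply: ltnW.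
Qed.

Lemma cell_nonempty pi c0 c1 r0 r1 x : x < size pi -> c0 <= x < c1 ->
  r0 <= nth 0 pi x < r1 -> std (cell pi c0 c1 r0 r1) <> [::].
Proof.
move=> hx hc hr; rewrite /std /cell => /(congr1 size); rewrite !size_map size_filter.
have hp : has (fun x => (c0 <= x < c1) && (r0 <= nth 0 pi x < r1)) (iota 0 (size pi)).
  by apply/hasP; exists x; [rewrite mem_iota | rewrite hc hr].
by move=> H; move: hp; rewrite has_count H.
Qed.

Theorem proposition11 (sigma : seq nat) :
  is_perm sigma -> sum_indecomposable sigma ->
  forall pi : seq nat, is_perm pi ->
    St Inc (Av sigma) pi -> Av (skew_sum [:: 0] sigma) pi.
Proof.
move=> hsig hind pi hpi [k [hk1 [c [r [[c0 ck cmon] [[r0 rk rmon] hM]]]]]] [m [hm hiso]].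
have hsk : skew_sum [:: 0] sigma = size sigma :: sigma by rewrite /skew_sum /= addn0.
rewrite hsk mask_nth_iota in hiso.
have hKsub : subseq (mask m (iota 0 (size pi))) (iota 0 (size pi)) by apply: mask_subseq.
have hKsort : sorted ltn (mask m (iota 0 (size pi))).
  exact: (subseq_sorted ltn_trans hKsub (iota_ltn_sorted 0 _)).
have hsizeK := proj1 hiso; rewrite size_map /= in hsizeK.
move: hKsub hKsort hsizeK hiso.
case: (mask m (iota 0 (size pi))) => [//|p J] hKsub hKsort [hJsize] hiso.
have hval x : x < size pi -> nth 0 pi x < size pi.
  by move=> hx; rewrite -[_ < _](mem_iota 0) -(perm_mem hpi) mem_nth.
have hJiso : order_iso (map (nth 0 pi) J) sigma := order_iso_cons hiso.
have hJsub : subseq J (iota 0 (size pi)) := subseq_trans (subseq_cons J p) hKsub.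
have hJn l : l < size J -> nth 0 J l < size pi.
  by move=> hl; have := mem_subseq hJsub (mem_nth 0 hl); rewrite mem_iota.
have hpn : p < size pi.
  by have := mem_subseq hKsub (mem_head p J); rewrite mem_iota.
have hpJ l : l < size J -> p < nth 0 J l.
  move=> hl; have /allP := order_path_min ltn_trans hKsort; apply; exact: mem_nth.
have hJsort : sorted ltn J := path_sorted hKsort.
have hJlt l : l < size J -> nth 0 pi (nth 0 J l) < nth 0 pi p.
  move=> hl; have := (proj2 hiso) l.+1 0; rewrite /= size_map => H.
  rewrite -(nth_map 0 0 (nth 0 pi)) // H //.
  by have := mem_nth 0 (eq_ind _ (fun z => l < z) hl _ hJsize) ; rewrite (perm_mem hsig) mem_iota.
have [i [hi hci]] := @locate c k p c0 (ltac:(by rewrite ck)).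
have [rho [hrho hrrho]] := @locate r k.+1 (nth 0 pi p) r0 (ltac:(by rewrite rk; apply: hval)).
have hcell x a b : x < size pi -> a < k -> b < k.+1 -> c a <= x < c a.+1 ->
    r b <= nth 0 pi x < r b.+1 -> b = a \/ b = a.+1.
  move=> hx ha hb hca hrb; have := hM a b ha hb.
  case: eqP => [-> | _]; first by left.
  case: eqP => [-> | _]; first by right.
  by move=> hE; exfalso; exact: (cell_nonempty hx hca hrb hE).
have hrho2 := hcell p i rho hpn hi hrho hci hrrho.
have hclaim l : l < size J ->
   (c i <= nth 0 J l < c i.+1 /\ r i <= nth 0 pi (nth 0 J l) < r i.+1) \/
   (i.+1 < k /\ c i.+1 <= nth 0 J l < c i.+2 /\
      r i.+1 <= nth 0 pi (nth 0 J l) < r i.+2).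
  move=> hl; set j := nth 0 J l.
  have hjn : j < size pi := hJn l hl.
  have [a [ha hca]] := @locate c k j c0 (ltac:(by rewrite ck)).
  have [b [hb hrb]] := @locate r k.+1 (nth 0 pi j) r0 (ltac:(by rewrite rk; apply: hval)).
  have hab := hcell j a b hjn ha hb hca hrb.
  have hia : i <= a.
    apply: (div_mono cmon hi ha (proj1 (andP hci)) (proj2 (andP hca))).
    exact: ltnW (hpJ l hl).
  have hbr : b <= rho.
    apply: (div_mono rmon hb hrho (proj1 (andP hrb)) (proj2 (andP hrrho))).
    exact: ltnW (hJlt l hl).
  have : (a = i /\ b = i) \/ (a = i.+1 /\ b = i.+1) \/ (a = i /\ b = i.+1 /\ rho = i.+1).
    by case: hab => eb; subst b; case: hrho2 => hr; subst rho; lia.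
  case=> [[ea eb] | [[ea eb] | [ea [eb er]]]]; [left | right | exfalso].
  - by subst a b.
  - by subst a b; split => //; split.
  subst a b rho.
  have := hM i i.+1 hi hrho.
  rewrite (gtn_eqF (ltnSn i)) eqxx => hinc.
  apply: hinc.
  apply: (@contains_cell pi [:: 1; 0] _ _ _ _ [:: p; j]).
  - apply: subseq_trans hKsub; rewrite /= eqxx sub1seq; exact: mem_nth.
  - by rewrite /= hci hrrho hca hrb.
  - have hlt := hJlt l hl; rewrite -/j in hlt.
    split => // -[|[|x]] [|[|y]] //= _ _; rewrite ?ltnn ?hlt //.
    by rewrite ltnNge ltnW.
set k1 := find (fun j => ~~ (j < c i.+1)) J.
have hk1J : k1 <= size J := find_size _ _.
have hpre l : l < k1 -> c i <= nth 0 J l < c i.+1 /\ r i <= nth 0 pi (nth 0 J l) < r i.+1.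
  move=> hl; have hlJ : l < size J := leq_trans hl hk1J.
  have hA := negbFE (before_find 0 hl).
  case: (hclaim l hlJ) => // [[_ [hc _]]].
  by move: hA hc; lia.
have hpost l : k1 <= l < size J -> i.+1 < k /\ c i.+1 <= nth 0 J l < c i.+2 /\ r i.+1 <= nth 0 pi (nth 0 J l) < r i.+2.
  move=> /andP [hl1 hl2].
  have hk1lt : k1 < size J := leq_ltn_trans hl1 hl2.
  have hhas : has (fun j => ~~ (j < c i.+1)) J by rewrite has_find.
  have hA := nth_find 0 hhas; rewrite -/k1 /= -leqNgt in hA.
  have hle : nth 0 J k1 <= nth 0 J l.
    have := sorted_leq_nth leq_trans leqnn 0 (sub_sorted (fun x y => @ltnW x y) hJsort).
    by apply.
  case: (hclaim l hl2) => // [[hc _]].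
  by move: hA hle hc; lia.
have hJs' : size J = size sigma := hJsize.
have hcond : forall l l', l < k1 -> k1 <= l' < size sigma -> nth 0 sigma l < nth 0 sigma l'.
  move=> l l' hl hl'.
  have hl'J : k1 <= l' < size J by rewrite hJs'.
  have hlJ : l < size J := leq_trans hl hk1J.
  have hl'J2 : l' < size J by case/andP: hl'J.
  have := (proj2 hJiso) l l' (ltac:(by rewrite size_map)) (ltac:(by rewrite size_map)).
  rewrite !(nth_map 0) // => <-.
  case: (hpre l hl) => _ /andP [_ h1].
  case: (hpost l' hl'J) => _ [_ /andP [h2 _]].
  exact: leq_trans h1 h2.
have [ha hb hds] := @split_perm sigma k1 hsig (ltac:(by rewrite -hJs')) hcond.
case: (leqP (size J) k1) => hJk.
  have := hM i i hi (leqW hi).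
  rewrite eqxx; apply; apply: (contains_cell hJsub) => //.
  apply/(all_nthP 0) => l hl; have [h1 h2] := hpre l (leq_trans hl hJk).
  by rewrite h1 h2.
have hk0 : k1 = 0.
  case: (hind _ _ ha hb hds) => h.
    by move: (f_equal size h); rewrite size_takel // -hJs'.
  move: (f_equal size h); rewrite size_map size_drop -hJs' => h2.
  have h3 : size J - k1 = 0 := h2. by move: h3 hJk; lia.
have hJ0 : 0 < size J by lia.
have [hik _] := hpost 0 (ltac:(by rewrite hk0 leqnn hJ0)).
have := hM i.+1 i.+1 hik (ltac:(by rewrite ltnS ltnW)).
rewrite eqxx; apply; apply: (contains_cell hJsub) => //.
apply/(all_nthP 0) => l hl; have [_ [h1 h2]] := hpost l (ltac:(by rewrite hk0 hl)).
by rewrite h1 h2.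
Qed.
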